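(* Let $\alpha$ be a curve in $\mathbb{E}^n$ given by $\alpha(t)=\rho(t)y(t)$, where $\rho$ is an arbitrary positive function and $y$ is an arclength parameterized curve in the unit hypersphere $\mathbb{S}^{n-1}(1)=\{p\in\mathbb{E}^n:\langle p,p\rangle=1\}$. Then $\alpha$ is a rectifying curve (with respect to the origin, i.e. $\langle\alpha(t),N(t)\rangle=0$ for all $t$) if and only if $\rho(t)=\frac{a}{\cos(t+t_0)}$ for some $a\in\mathbb{R}\setminus\{0\}$ and $t_0\in\mathbb{R}$.
   Context: For a (regular, sufficiently differentiable) curve $\alpha$ in $\mathbb{E}^n$ with speed $v=\|\alpha'\|$, the Frenet frame $T,N,B_1,\dots,B_{n-2}$ is orthonormal with $T=\alpha'/v$ and satisfies $T'=v\kappa_1N$, $N'=v(-\kappa_1T+\kappa_2B_1)$, etc., with $\kappa_1>0$; in particular $N$ is the unit vector in the direction of $T'$. A curve $\alpha$ is a rectifying curve if the orthogonal complement of $N$ contains a fixed point at every parameter; here the fixed point is the origin, i.e. $\langle\alpha,N\rangle\equiv0$. *)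

(* Defs.v *)
From HB Require Import structures.
From mathcomp Require Import all_boot all_order all_algebra.
From mathcomp Require Import all_classical all_reals all_analysis.
Set Implicit Arguments. Unset Strict Implicit. Unset Printing Implicit Defensive.
Import Order.TTheory GRing.Theory Num.Theory.
Import numFieldNormedType.Exports.
Local Open Scope ring_scope.

Section Curves.
Variables (R : realType) (n : nat).

(* Euclidean inner product and Euclidean norm on E^n = 'rV[R]_n
   (the library's norm on matrices is the max norm, so we define these). *)
Definition dotv (u v : 'rV[R]_n) : R := (u *m v^T) 0 0.
Definition enorm (u : 'rV[R]_n) : R := Num.sqrt (dotv u u).

Definition tangent (alpha : R -> 'rV[R]_n) (t : R) : 'rV[R]_n :=
  (enorm (derive1 alpha t))^-1 *: derive1 alpha t.

Definition principal_normal (alpha : R -> 'rV[R]_n) (t : R) : 'rV[R]_n :=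
  (enorm (derive1 (tangent alpha) t))^-1 *: derive1 (tangent alpha) t.

Definition rectifying_on (I : interval R) (alpha : R -> 'rV[R]_n) : Prop :=
  forall t, t \in I -> dotv (alpha t) (principal_normal alpha t) = 0.

End Curves.

(* Main.v *)
Require Import Defs.
From HB Require Import structures.
From mathcomp Require Import all_boot all_order all_algebra.
From mathcomp Require Import all_classical all_reals all_analysis.
From mathcomp Require Import ring lra.
Import Order.TTheory GRing.Theory Num.Theory.
Import numFieldNormedType.Exports.
Local Open Scope ring_scope.

Section H.
Set Implicit Arguments. Unset Strict Implicit.
Variables (R : realType) (n : nat).

Lemma is_deriveZf (f : R -> R) (g : R -> 'rV[R]_n) (t df : R) (dg : 'rV[R]_n) :
  is_derive t 1 f df -> is_derive t 1 g dg ->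
  is_derive t 1 (fun s => f s *: g s) (df *: g t + f t *: dg).
Proof.
move=> Hf [gd <-].
have hc : forall i j, is_derive t 1 (fun s => (f s *: g s) i j)
   (f t *: 'D_1 (fun s => g s i j) t + g t i j *: df).
  move=> i j.
  have -> : (fun s => (f s *: g s) i j) = f * (fun s => g s i j).
    by apply/funext => s; rewrite mxE.
  apply: is_deriveM; apply: derivableP.
  exact: (derivable_mxP _ _ _).1 gd i j.
have dd : derivable (fun s => f s *: g s) t 1.
  by apply/derivable_mxP => i j; case: (hc i j).
apply: DeriveDef => //.
rewrite (derive_mx dd) (derive_mx gd).
apply/matrixP => i j; rewrite !mxE.
have [_ ->] := hc i j.
rewrite addrC; congr (_ + _); exact: mulrC.
Qed.

Lemma dotvE (u w : 'rV[R]_n) : dotv u w = \sum_(i < n) u 0 i * w 0 i.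
Proof. by rewrite /dotv !mxE; apply: eq_bigr => i _; rewrite !mxE. Qed.

Lemma is_derive_dotv (f g : R -> 'rV[R]_n) (t : R) (df dg : 'rV[R]_n) :
  is_derive t 1 f df -> is_derive t 1 g dg ->
  is_derive t 1 (fun s => dotv (f s) (g s)) (dotv df (g t) + dotv (f t) dg).
Proof.
move=> [fd <-] [gd <-].
have -> : (fun s => dotv (f s) (g s)) =
   \sum_(i < n) (fun s => f s 0 i * g s 0 i).
  by apply/funext => s; rewrite dotvE fct_sumE.
have H : forall i, is_derive t 1 (fun s => f s 0 i * g s 0 i)
   ('D_1 f t 0 i * g t 0 i + f t 0 i * 'D_1 g t 0 i).
  move=> i.
  have Hfi : is_derive t 1 (fun s => f s 0 i) ('D_1 f t 0 i).
    apply: DeriveDef; first exact: (derivable_mxP _ _ _).1 fd 0 i.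
    by rewrite (derive_mx fd) mxE.
  have Hgi : is_derive t 1 (fun s => g s 0 i) ('D_1 g t 0 i).
    apply: DeriveDef; first exact: (derivable_mxP _ _ _).1 gd 0 i.
    by rewrite (derive_mx gd) mxE.
  have HH := is_deriveM Hfi Hgi.
  apply: (is_derive_eq HH).
  rewrite addrC; congr (_ + _); exact: mulrC.
have HH := is_derive_sum H.
apply: (is_derive_eq HH).
by rewrite !dotvE -big_split.
Qed.


Lemma dotvC (u w : 'rV[R]_n) : dotv u w = dotv w u.
Proof. by rewrite !dotvE; apply: eq_bigr => i _; rewrite mulrC. Qed.

Lemma dotvDl (u v w : 'rV[R]_n) : dotv (u + v) w = dotv u w + dotv v w.
Proof. by rewrite !dotvE -big_split; apply: eq_bigr => i _; rewrite !mxE mulrDl. Qed.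

Lemma dotvDr (u v w : 'rV[R]_n) : dotv w (u + v) = dotv w u + dotv w v.
Proof. by rewrite ![dotv w _]dotvC dotvDl. Qed.

Lemma dotvZl (k : R) (u w : 'rV[R]_n) : dotv (k *: u) w = k * dotv u w.
Proof. by rewrite !dotvE mulr_sumr; apply: eq_bigr => i _; rewrite !mxE mulrA. Qed.

Lemma dotvZr (k : R) (u w : 'rV[R]_n) : dotv w (k *: u) = k * dotv w u.
Proof. by rewrite ![dotv w _]dotvC dotvZl. Qed.

Lemma dotv_ge0 (u : 'rV[R]_n) : 0 <= dotv u u.
Proof. by rewrite dotvE; apply: sumr_ge0 => i _; by rewrite -expr2 sqr_ge0. Qed.

Lemma dotv_eq0 (u : 'rV[R]_n) : dotv u u = 0 -> u = 0.
Proof.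
rewrite dotvE => /eqP; rewrite psumr_eq0 => [/allP H|i _]; last by rewrite -expr2 sqr_ge0.
apply/matrixP => i j; rewrite (ord1 i) mxE.
have := H j (mem_index_enum j); rewrite implyTb mulf_eq0 orbb.
by move/eqP.
Qed.

Lemma enorm_neq0 (u : 'rV[R]_n) : u != 0 -> enorm u != 0.
Proof.
move=> u0; rewrite /enorm sqrtr_eq0 -ltNge lt_def dotv_ge0 andbT.
by apply/eqP => /dotv_eq0 h; rewrite h eqxx in u0.
Qed.

Lemma sqrt_eq1 (x : R) : Num.sqrt x = 1 -> x = 1.
Proof.
move=> h; have [x0|x0] := leP 0 x.
  by rewrite -(sqr_sqrtr x0) h expr1n.
by move: h; rewrite ltr0_sqrtr // => /esym/eqP; rewrite oner_eq0.
Qed.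

Lemma cst_on_itv (f : R -> R) (a b : R) :
  (forall x, x \in `]a, b[ -> is_derive x (1:R) f (0:R)) ->
  forall x y : R, x \in `]a, b[ -> y \in `]a, b[ -> f x = f y.
Proof.
move=> Hd.
suff H : forall x y : R, x <= y -> x \in `]a, b[ -> y \in `]a, b[ -> f x = f y.
  move=> x y xI yI; have [xy|yx] := leP x y; first exact: H.
  by apply/esym/H => //; exact: ltW.
move=> x y xy xI yI.
have sub : forall z, z \in `[x, y] -> z \in `]a, b[.
  move=> z; rewrite !in_itv /= => /andP[xz zy].
  move: xI yI; rewrite !in_itv /= => /andP[ax _] /andP[_ yb].
  by apply/andP; split; lra.
have H1 : forall z, z \in `]x, y[ -> is_derive z (1:R) f ((fun _ : R => (0:R)) z).
  by move=> z zI; apply: Hd; apply: sub; apply: subset_itv_oo_cc.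
have [|c _] := MVT_segment xy H1.
  apply: derivable_within_continuous => z zI.
  by case: (Hd z (sub z zI)).
by rewrite mul0r => /eqP; rewrite subr_eq0 => /eqP.
Qed.


Lemma near_cst_deriv0 (f : R -> R) (s c df : R) :
  (\forall z \near s, f z = c) -> is_derive s (1:R) f df -> df = 0.
Proof.
move=> E D.
have D2 := near_eq_is_derive E D.
by rewrite -(@derive_val _ _ _ _ _ _ _ D2) derive_cst.
Qed.

Lemma is_derive_derive1 (f : R -> 'rV[R]_n) (s : R) :
  derivable f s 1 -> is_derive s (1:R) f (derive1 f s).
Proof. by move=> d; rewrite derive1E; apply: derivableP. Qed.

Lemma is_derive_derive1R (f : R -> R) (s : R) :
  derivable f s 1 -> is_derive s (1:R) f (derive1 f s).
Proof. by move=> d; rewrite derive1E; apply: derivableP. Qed.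


Lemma dot_facts (u0 u1 u2 : 'rV[R]_n) (r r1 r2 : R) :
  dotv u0 u0 = 1 -> dotv u0 u1 = 0 -> dotv u1 u0 = 0 -> dotv u1 u1 = 1 ->
  dotv u2 u0 = -1 -> dotv u2 u1 = 0 -> dotv u0 u2 = -1 -> dotv u1 u2 = 0 ->
  [/\ dotv ((r2 *: u0 + r1 *: u1) + (r1 *: u1 + r *: u2)) (r1 *: u0 + r *: u1) = r1 * r2 + r * r1,
      dotv (r1 *: u0 + r *: u1) ((r2 *: u0 + r1 *: u1) + (r1 *: u1 + r *: u2)) = r1 * r2 + r * r1 &
      forall k m, dotv (r *: u0) (k *: (r1 *: u0 + r *: u1) + m *: ((r2 *: u0 + r1 *: u1) + (r1 *: u1 + r *: u2)))
        = r * (k * r1 + m * (r2 - r))].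
Proof.
move=> f00 f01 f10 f11 f20 f21 f02 f12.
split; [| | move=> k m];
  rewrite !(dotvDl, dotvDr, dotvZl, dotvZr) ?f00 ?f01 ?f10 ?f11 ?f20 ?f21 ?f02 ?f12;
  rewrite ?mulr0 ?mulr1 ?addr0 ?add0r ?mulrN1; ring.
Qed.


Lemma final_alg (r r1 r2 S : R) : S != 0 -> S ^+ 2 = r1 ^+ 2 + r ^+ 2 ->
  r * (- S ^- 2 *: ((2 * S)^-1 * (r1 * r2 + r * r1 + (r1 * r2 + r * r1))) * r1 +
   S^-1 * (r2 - r)) * S ^+ 3 = r ^+ 2 * (r * r2 - 2 * r1 ^+ 2 - r ^+ 2).
Proof.
move=> S0 S2.
have -> : forall a b : R, a *: b = a * b by [].
transitivity (r * (- (r1 * r2 + r * r1) * r1 + S ^+ 2 * (r2 - r))).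
  by field.
by rewrite S2; ring.
Qed.

End H.

Section K.
Variables (R : realType) (n : nat).

Lemma key (rho : R -> R) (y : R -> 'rV[R]_n) (t1 t2 t : R) :
  (forall s, s \in `]t1, t2[ -> 0 < rho s) ->
  (forall s, s \in `]t1, t2[ -> derivable rho s 1 /\ derivable (derive1 rho) s 1) ->
  (forall s, s \in `]t1, t2[ -> derivable y s 1 /\ derivable (derive1 y) s 1) ->
  (forall s, s \in `]t1, t2[ -> dotv (y s) (y s) = 1) ->
  (forall s, s \in `]t1, t2[ -> enorm (derive1 y s) = 1) ->
  t \in `]t1, t2[ ->
  dotv (rho t *: y t) (derive1 (tangent (fun s => rho s *: y s)) t) *
    (Num.sqrt (derive1 rho t ^+ 2 + rho t ^+ 2)) ^+ 3 =
  rho t ^+ 2 * (rho t * derive1 (derive1 rho) t - 2 * derive1 rho t ^+ 2 - rho t ^+ 2).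
Proof.
move=> Hpos Hrho Hy Hyy Hny tI.
have nI : \forall z \near t, z \in `]t1, t2[ by exact: near_in_itvoo.
have dy : forall s, s \in `]t1, t2[ -> is_derive s (1:R) y (derive1 y s).
  by move=> s sI; apply: is_derive_derive1; case: (Hy s sI).
have drho : forall s, s \in `]t1, t2[ -> is_derive s (1:R) rho (derive1 rho s).
  by move=> s sI; apply: is_derive_derive1R; case: (Hrho s sI).
have ddy : is_derive t (1:R) (derive1 y) (derive1 (derive1 y) t).
  by apply: is_derive_derive1; case: (Hy t tI).
have ddrho : is_derive t (1:R) (derive1 rho) (derive1 (derive1 rho) t).
  by apply: is_derive_derive1R; case: (Hrho t tI).
have yy1 : forall s, s \in `]t1, t2[ -> dotv (derive1 y s) (derive1 y s) = 1.
  by move=> s sI; apply: sqrt_eq1; exact: Hny.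
have yy0 : forall s, s \in `]t1, t2[ -> dotv (y s) (derive1 y s) = 0.
  move=> s sI.
  have D := is_derive_dotv (dy s sI) (dy s sI).
  have E : \forall z \near s, dotv (y z) (y z) = 1.
    by near=> z; apply: Hyy; near: z; exact: near_in_itvoo.
  have := near_cst_deriv0 E D.
  rewrite dotvC => /eqP; rewrite -mulr2n mulrn_eq0 /= => /eqP //.
set r := rho t; set r1 := derive1 rho t; set r2 := derive1 (derive1 rho) t.
set y0 := y t; set y1 := derive1 y t; set y2 := derive1 (derive1 y) t.
have f00 : dotv y0 y0 = 1 by exact: Hyy.
have f01 : dotv y0 y1 = 0 by exact: yy0.
have f10 : dotv y1 y0 = 0 by rewrite dotvC.
have f11 : dotv y1 y1 = 1 by exact: yy1.
have f02 : dotv y0 y2 = -1.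
  have D := is_derive_dotv (dy t tI) ddy.
  have E : \forall z \near t, dotv (y z) (derive1 y z) = 0.
    by near=> z; apply: yy0; near: z; exact: near_in_itvoo.
  have := near_cst_deriv0 E D.
  by rewrite -/y0 -/y1 -/y2 f11 => /eqP; rewrite addrC addr_eq0 => /eqP.
have f20 : dotv y2 y0 = -1 by rewrite dotvC.
have f12 : dotv y1 y2 = 0.
  have D := is_derive_dotv ddy ddy.
  have E : \forall z \near t, dotv (derive1 y z) (derive1 y z) = 1.
    by near=> z; apply: yy1; near: z; exact: near_in_itvoo.
  have := near_cst_deriv0 E D.
  rewrite dotvC => /eqP; rewrite -mulr2n mulrn_eq0 /= => /eqP //.
have f21 : dotv y2 y1 = 0 by rewrite dotvC.
pose Aex := fun s => derive1 rho s *: y s + rho s *: derive1 y s.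
have hA : \forall z \near t, derive1 (fun s => rho s *: y s) z = Aex z.
  near=> z.
  have zI : z \in `]t1, t2[ by near: z; exact: near_in_itvoo.
  have D := is_deriveZf (drho z zI) (dy z zI).
  by rewrite derive1E (@derive_val _ _ _ _ _ _ _ D).
pose A' := (r2 *: y0 + r1 *: y1) + (r1 *: y1 + r *: y2).
have dA : is_derive t (1:R) Aex A'.
  exact: is_deriveD (is_deriveZf ddrho (dy t tI)) (is_deriveZf (drho t tI) ddy).
have At : Aex t = r1 *: y0 + r *: y1 by [].
have Qt : dotv (Aex t) (Aex t) = r1 ^+ 2 + r ^+ 2.
  rewrite At !(dotvDl, dotvDr, dotvZl, dotvZr) f00 f01 f10 f11.
  by rewrite !mulr0 !mulr1 addr0 add0r !expr2.
have rpos : 0 < r by exact: Hpos.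
have Qpos : 0 < dotv (Aex t) (Aex t).
  by rewrite Qt; apply: ltr_wpDl; [exact: sqr_ge0 | exact: exprn_gt0].
pose Vf := fun s => Num.sqrt (dotv (Aex s) (Aex s)).
have dQ := is_derive_dotv dA dA.
have dV : is_derive t (1:R) Vf ((2 * Num.sqrt (dotv (Aex t) (Aex t)))^-1 *
      (dotv A' (Aex t) + dotv (Aex t) A')).
  exact: (is_derive1_comp (is_derive1_sqrt Qpos) dQ).
have Vt0 : Vf t != 0 by rewrite /Vf gt_eqF // sqrtr_gt0.
have dVi := is_deriveV Vt0 dV.
have dT := is_deriveZf dVi dA.
have hT : \forall z \near t, tangent (fun s => rho s *: y s) z = (fun s => (Vf s)^-1 *: Aex s) z.
  near=> z.
  by rewrite /tangent /Vf /enorm (near hA z).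
have -> : derive1 (tangent (fun s => rho s *: y s)) t =
   (- (Vf t) ^- 2 *: ((2 * Num.sqrt (dotv (Aex t) (Aex t)))^-1 *
      (dotv A' (Aex t) + dotv (Aex t) A'))) *: Aex t + (Vf t)^-1 *: A'.
  rewrite derive1E (near_eq_derive _ hT).
  exact: (@derive_val _ _ _ _ _ _ _ dT).
rewrite /Vf Qt /A' At.
have [e1 e2 e3] := dot_facts r r1 r2 f00 f01 f10 f11 f20 f21 f02 f12.
rewrite e1 e2 e3.
set S := Num.sqrt (r1 ^+ 2 + r ^+ 2).
have S2 : S ^+ 2 = r1 ^+ 2 + r ^+ 2.
  by rewrite /S sqr_sqrtr //; rewrite -Qt; exact: ltW.
have S0 : S != 0 by rewrite /S -Qt gt_eqF // sqrtr_gt0.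
exact: final_alg.
Unshelve. all: by end_near.
Qed.
End K.

Section L.
Variables (R : realType).

Lemma alg_ode (a C Sn : R) : C != 0 ->
  a / C * (a * (Sn * (C^-1 * (- C ^- 2 *: - Sn) + C^-1 * (- C ^- 2 *: - Sn)) + C^-1 * C^-1 * C)) =
  2 * (a * (Sn * (C^-1 * C^-1))) ^+ 2 + (a / C) ^+ 2.
Proof.
move=> C0.
have scE : forall x y : R, x *: y = x * y by [].
rewrite !scE.
by field.
Qed.

Lemma ode_of_formula (rho : R -> R) (t1 t2 a t0 : R) :
  (forall s, s \in `]t1, t2[ -> 0 < rho s) ->
  (forall s, s \in `]t1, t2[ -> rho s = a / cos (s + t0)) ->
  forall t, t \in `]t1, t2[ ->
  rho t * derive1 (derive1 rho) t = 2 * derive1 rho t ^+ 2 + rho t ^+ 2.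
Proof.
move=> Hpos Hf t tI.
pose c := fun s : R => cos (s + t0).
pose sn := fun s : R => sin (s + t0).
have Dsh : forall s : R, is_derive s (1:R) (fun s => s + t0) 1.
  move=> s; have := is_deriveD (is_derive_id s (1:R)) (is_derive_cst t0 s (1:R)).
  by move=> h; apply: (is_derive_eq h); rewrite addr0.
have Dc : forall s, is_derive s (1:R) c (- sn s).
  move=> s; have h := @is_derive1_comp _ cos (fun s => s + t0) s _ _ (is_derive_cos (s + t0)) (Dsh s).
  by apply: (is_derive_eq h); rewrite mulr1.
have Dsn : forall s, is_derive s (1:R) sn (c s).
  move=> s; have h := @is_derive1_comp _ sin (fun s => s + t0) s _ _ (is_derive_sin (s + t0)) (Dsh s).
  by apply: (is_derive_eq h); rewrite mulr1.
have c0 : forall s, s \in `]t1, t2[ -> c s != 0.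
  move=> s sI; apply/eqP => h; have := Hpos s sI.
  by rewrite Hf // -/(c s) h invr0 mulr0 ltxx.
pose ci := fun s => (c s)^-1.
have Dci : forall s, s \in `]t1, t2[ -> is_derive s (1:R) ci (- (c s) ^- 2 *: (- sn s)).
  by move=> s sI; exact: is_deriveV (c0 s sI) (Dc s).
have Drho : forall s, s \in `]t1, t2[ -> derive1 rho s = a * (sn s * (ci s * ci s)).
  move=> s sI.
  have h := is_deriveZ a (Dci s sI).
  have E : \forall z \near s, (a *: ci) z = rho z.
    near=> z; rewrite Hf //; last by near: z; exact: near_in_itvoo.
  have h2 := near_eq_is_derive E h.
  rewrite derive1E (@derive_val _ _ _ _ _ _ _ h2).
  rewrite /GRing.scale /= /ci; congr (a * _).
  by rewrite mulNr mulrN opprK -exprVn expr2 mulrC.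
have Dg1 : is_derive t (1:R) (fun s => a * (sn s * (ci s * ci s)))
   (a * (sn t * (ci t * (- (c t) ^- 2 *: (- sn t)) + ci t * (- (c t) ^- 2 *: (- sn t))) + (ci t * ci t) * c t)).
  have h1 := is_deriveM (Dci t tI) (Dci t tI).
  have h2 := is_deriveM (Dsn t) h1.
  have h3 := is_deriveZ a h2.
  by apply: (is_derive_eq h3).
have E2 : \forall z \near t, derive1 rho z = a * (sn z * (ci z * ci z)).
  by near=> z; apply: Drho; near: z; exact: near_in_itvoo.
have -> : derive1 (derive1 rho) t =
   a * (sn t * (ci t * (- (c t) ^- 2 *: (- sn t)) + ci t * (- (c t) ^- 2 *: (- sn t))) + (ci t * ci t) * c t).
  by rewrite derive1E (near_eq_derive _ E2); exact: (@derive_val _ _ _ _ _ _ _ Dg1).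
rewrite (Drho t tI) (Hf t tI) /ci -/(c t) -/(sn t).
exact: alg_ode (c0 t tI).
Unshelve. all: by end_near.
Qed.

Lemma alg_h1 (r r1 r2 C Sn : R) : r != 0 -> r * r2 = 2 * r1 ^+ 2 + r ^+ 2 ->
  C *: (- r ^- 2 *: r1) + r^-1 *: - Sn -
  (Sn *: - (r1 *: (r^-1 *: (- r ^- 2 *: r1) + r^-1 *: (- r ^- 2 *: r1)) + (r^-1 * r^-1) *: r2)
   + (- (r1 * (r^-1 * r^-1))) *: C) = 0.
Proof.
move=> rn0 ode.
have scE : forall x y : R, x *: y = x * y by [].
rewrite !scE.
have -> : r2 = (2 * r1 ^+ 2 + r ^+ 2) / r by rewrite -ode [r * r2]mulrC (mulfK rn0).
by field.
Qed.

Lemma alg_h2 (r r1 r2 C Sn : R) : r != 0 -> r * r2 = 2 * r1 ^+ 2 + r ^+ 2 ->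
  Sn *: (- r ^- 2 *: r1) + r^-1 *: C +
  (C *: - (r1 *: (r^-1 *: (- r ^- 2 *: r1) + r^-1 *: (- r ^- 2 *: r1)) + (r^-1 * r^-1) *: r2)
   + (- (r1 * (r^-1 * r^-1))) *: - Sn) = 0.
Proof.
move=> rn0 ode.
have scE : forall x y : R, x *: y = x * y by [].
rewrite !scE.
have -> : r2 = (2 * r1 ^+ 2 + r ^+ 2) / r by rewrite -ode [r * r2]mulrC (mulfK rn0).
by field.
Qed.

Lemma alg_u (U W C Sn : R) : C ^+ 2 + Sn ^+ 2 = 1 ->
  U = (C * U - Sn * W) * C + (Sn * U + C * W) * Sn.
Proof.
move=> h.
transitivity ((C ^+ 2 + Sn ^+ 2) * U); first by rewrite h mul1r.
ring.
Qed.

Lemma alg_fin (r C A B Ct St : R) : r != 0 -> C != 0 -> r^-1 = A * Ct + B * St ->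
  r = C^-1 / (Ct * (A / C) - St * - (B / C)).
Proof.
move=> r0 C0 h.
have -> : Ct * (A / C) - St * - (B / C) = r^-1 / C.
  rewrite h; field => //.
field; rewrite ?r0 ?C0 ?invr_eq0 //.
Qed.

Lemma formula_of_ode (rho : R -> R) (t1 t2 : R) :
  t1 < t2 ->
  (forall s, s \in `]t1, t2[ -> 0 < rho s) ->
  (forall s, s \in `]t1, t2[ -> derivable rho s 1 /\ derivable (derive1 rho) s 1) ->
  (forall t, t \in `]t1, t2[ ->
    rho t * derive1 (derive1 rho) t = 2 * derive1 rho t ^+ 2 + rho t ^+ 2) ->
  exists a t0 : R, a != 0 /\ forall t, t \in `]t1, t2[ -> rho t = a / cos (t + t0).
Proof.
move=> t12 Hpos Hd Hode.
have r0 : forall s, s \in `]t1, t2[ -> rho s != 0 by move=> s sI; rewrite gt_eqF // Hpos.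
have Dr : forall s, s \in `]t1, t2[ -> is_derive s (1:R) rho (derive1 rho s).
  by move=> s sI; apply: is_derive_derive1R; case: (Hd s sI).
have Dr1 : forall s, s \in `]t1, t2[ -> is_derive s (1:R) (derive1 rho) (derive1 (derive1 rho) s).
  by move=> s sI; apply: is_derive_derive1R; case: (Hd s sI).
pose u := fun s => (rho s)^-1.
have Du : forall s, s \in `]t1, t2[ -> is_derive s (1:R) u (- (rho s) ^- 2 *: derive1 rho s).
  by move=> s sI; exact: is_deriveV (r0 s sI) (Dr s sI).
pose w := fun s => - (derive1 rho s * (u s * u s)).
have Dw := fun s sI => is_deriveN (is_deriveM (Dr1 s sI) (is_deriveM (Du s sI) (Du s sI))).
pose h1 := fun s => cos s * u s - sin s * w s.
pose h2 := fun s => sin s * u s + cos s * w s.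
have Dh1 : forall s, s \in `]t1, t2[ -> is_derive s (1:R) h1 0.
  move=> s sI.
  have h := is_deriveB (is_deriveM (is_derive_cos s) (Du s sI)) (is_deriveM (is_derive_sin s) (Dw s sI)).
  apply: (is_derive_eq h).
  by apply: alg_h1; [exact: r0 | exact: Hode].
have Dh2 : forall s, s \in `]t1, t2[ -> is_derive s (1:R) h2 0.
  move=> s sI.
  have h := is_deriveD (is_deriveM (is_derive_sin s) (Du s sI)) (is_deriveM (is_derive_cos s) (Dw s sI)).
  apply: (is_derive_eq h).
  by apply: alg_h2; [exact: r0 | exact: Hode].
pose m := (t1 + t2) / 2.
have mI : m \in `]t1, t2[ by rewrite in_itv /= /m; apply/andP; split; lra.
set A := h1 m; set B := h2 m.
have hu : forall t, t \in `]t1, t2[ -> u t = A * cos t + B * sin t.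
  move=> t tI.
  rewrite /A /B -(cst_on_itv Dh1 tI mI) -(cst_on_itv Dh2 tI mI) /h1 /h2.
  exact: alg_u (cos2Dsin2 t).
have um : 0 < u m by rewrite /u invr_gt0 Hpos.
have AB : 0 < A ^+ 2 + B ^+ 2.
  rewrite lt_def addr_ge0 ?sqr_ge0 // andbT paddr_eq0 ?sqr_ge0 // !sqrf_eq0.
  apply/negP => /andP[/eqP A0 /eqP B0].
  by move: um; rewrite hu // A0 B0 !mul0r addr0 ltxx.
set C := Num.sqrt (A ^+ 2 + B ^+ 2).
have Cpos : 0 < C by rewrite sqrtr_gt0.
have C2 : C ^+ 2 = A ^+ 2 + B ^+ 2 by rewrite sqr_sqrtr // ltW.
have C0 : C != 0 by rewrite gt_eqF.
have x2 : (A / C) ^+ 2 <= 1.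
  rewrite expr_div_n C2 ler_pdivrMr // mul1r lerDl; exact: sqr_ge0.
have xI : A / C \in `[-1, 1].
  rewrite in_itv /=; apply/andP; split; nra.
have hsin : Num.sqrt (1 - (A / C) ^+ 2) = `|B| / C.
  have -> : 1 - (A / C) ^+ 2 = (B / C) ^+ 2.
    by rewrite !expr_div_n C2; field; rewrite -C2 expf_neq0.
  by rewrite sqrtr_sqr normrM normfV (gtr0_norm Cpos).
have [t0 [ct0 st0]] : exists t0, cos t0 = A / C /\ sin t0 = - (B / C).
  have xI' : -1 <= A / C <= 1 by move: xI; rewrite in_itv.
  have [B0|B0] := leP 0 B.
    exists (- acos (A / C)); rewrite cosN sinN acosK // sin_acos // hsin.
    by rewrite ger0_norm.
  exists (acos (A / C)); rewrite acosK // sin_acos // hsin.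
  by rewrite ltr0_norm // mulNr.
exists C^-1, t0; split; first by rewrite invr_eq0.
move=> t tI; rewrite cosD ct0 st0.
apply: alg_fin => //; first exact: r0.
by rewrite -hu.
Qed.


Lemma alg_iff (d k S r a b c : R) : k != 0 -> 0 < S -> 0 < r ->
  d * S ^+ 3 = r ^+ 2 * (a - b - c) -> (k * d = 0 <-> a = b + c).
Proof.
move=> k0 S0 r0 h; split => H.
  have d0 : d = 0 by move/eqP: H; rewrite mulf_eq0 (negbTE k0) => /eqP.
  move: h; rewrite d0 mul0r => /esym/eqP; rewrite mulf_eq0 sqrf_eq0 (gt_eqF r0) /=.
  by rewrite -addrA -opprD subr_eq0 => /eqP.
have : d * S ^+ 3 = 0 by rewrite h H addrAC addrK subrr mulr0.
move/eqP; rewrite mulf_eq0 expf_eq0 (gt_eqF S0) andbF orbF => /eqP ->.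
by rewrite mulr0.
Qed.

End L.

Theorem theorem4p5 (R : realType) (n : nat) (t1 t2 : R)
  (rho : R -> R) (y : R -> 'rV[R]_n) :
  (2 <= n)%N -> t1 < t2 ->
  (* rho positive, twice differentiable *)
  (forall t, t \in `]t1, t2[ -> 0 < rho t) ->
  (forall t, t \in `]t1, t2[ -> derivable rho t 1 /\ derivable (derive1 rho) t 1) ->
  (* y twice differentiable, in the unit hypersphere, arclength parameterized *)
  (forall t, t \in `]t1, t2[ -> derivable y t 1 /\ derivable (derive1 y) t 1) ->
  (forall t, t \in `]t1, t2[ -> dotv (y t) (y t) = 1) ->
  (forall t, t \in `]t1, t2[ -> enorm (derive1 y t) = 1) ->
  (* Frenet frame exists: kappa_1 > 0, i.e. T' never vanishes *)
  (forall t, t \in `]t1, t2[ ->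
     derive1 (tangent (fun s => rho s *: y s)) t != 0) ->
  rectifying_on `]t1, t2[ (fun s => rho s *: y s) <->
  exists a t0 : R, a != 0 /\
    forall t, t \in `]t1, t2[ -> rho t = a / cos (t + t0).
Proof.
move=> n2 t12 Hpos Hrho Hy Hyy Hny HT.
have E : forall t, t \in `]t1, t2[ ->
   (dotv ((fun s => rho s *: y s) t) (principal_normal (fun s => rho s *: y s) t) = 0 <->
    rho t * derive1 (derive1 rho) t = 2 * derive1 rho t ^+ 2 + rho t ^+ 2).
  move=> t tI; rewrite /principal_normal dotvZr.
  have hk := key Hpos Hrho Hy Hyy Hny tI.
  apply: (alg_iff _ _ _ hk).
  - by rewrite invr_eq0; apply: enorm_neq0; exact: HT.
  - by rewrite sqrtr_gt0 ltr_wpDl ?sqr_ge0 // exprn_gt0 // Hpos.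
  - exact: Hpos.
split.
  move=> Hr; apply: formula_of_ode => // t tI.
  by apply/(E t tI)/Hr.
move=> [a [t0 [a0 Hf]]] t tI.
apply/(E t tI).
exact: (ode_of_formula Hpos Hf tI).
Qed.
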